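(* Let $\mathfrak{d}=\bigoplus_{n\ge0}\mathfrak{d}_n:\mathsf{cf}(\mathrm{UT}_\bullet)\to\mathsf{cf}(\mathrm{UT}_\bullet)$ with $\mathfrak{d}_n(\psi)=\psi\circ\dagger$. Then $\mathfrak{d}$ is a graded antiautomorphism of the Hopf algebra $\mathsf{cf}(\mathrm{UT}_\bullet)$, i.e. $\mu\circ(\mathfrak{d}\otimes\mathfrak{d})=\mathfrak{d}\circ\mu\circ\beta$ and $\Delta\circ\mathfrak{d}=\beta\circ(\mathfrak{d}\otimes\mathfrak{d})\circ\Delta$, where $\beta$ swaps the two tensor factors. Moreover $\mathrm{Ind}^{\mathrm{GL}}_{\mathrm{UT}}\circ\mathfrak{d}=\mathrm{Ind}^{\mathrm{GL}}_{\mathrm{UT}}$, where $\mathrm{Ind}^{\mathrm{GL}}_{\mathrm{UT}}=\bigoplus_n\mathrm{Ind}^{\mathrm{GL}_n}_{\mathrm{UT}_n}$.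
   Context: Fix the finite field $\mathbb{F}_q$; $[n]=\{1,\dots,n\}$. $\mathrm{GL}_n$ is the group of invertible $n\times n$ matrices over $\mathbb{F}_q$, $\mathrm{UT}_n$ the unipotent upper triangular subgroup, $\mathsf{cf}(G)$ complex class functions, $\mathrm{Ind}$ induction. Let $\tilde w(i)=n+1-i$ and for an $n\times n$ matrix $x$ define $x^\dagger$ by $(x^\dagger)_{r,s}=x_{\tilde w(s),\tilde w(r)}$; $\dagger$ is an anti-automorphism of $\mathrm{GL}_n$ preserving $\mathrm{UT}_n$. Hopf algebra $\mathsf{cf}(\mathrm{UT}_\bullet)=\bigoplus_n\mathsf{cf}(\mathrm{UT}_n)$: for $I\subseteq[n]$, $I^c=[n]\setminus I$, let $\mathrm{UL}_I=\{g\in\mathrm{UT}_n:(g-1_n)_{i,j}\ne0\text{ only if }(i,j)\in I\times I\cup I^c\times I^c\}$, $\mathrm{UR}_I=\{g\in\mathrm{UT}_n:(g-1_n)_{i,j}\ne0\text{ only if }(i,j)\in I\times I^c\}$, $\mathrm{UP}_I=\{g\in\mathrm{UT}_n:(g-1_n)_{i,j}=0\text{ for }(i,j)\in I^c\times I\}=\mathrm{UL}_I\ltimes\mathrm{UR}_I$ (and $\mathrm{UP}_{[i]}=\mathrm{UT}_n$). With $\mathrm{cano}_I:I\to[|I|]$ order-preserving, $\mathrm{UL}_I\cong\mathrm{UT}_{|I|}\times\mathrm{UT}_{|I^c|}$ by relabelling the $I\times I$ and $I^c\times I^c$ blocks via $\mathrm{cano}_I,\mathrm{cano}_{I^c}$,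 inducing $\mathrm{st}_{(I,I^c)}:\mathsf{cf}(\mathrm{UL}_I)\to\mathsf{cf}(\mathrm{UT}_{|I|})\otimes\mathsf{cf}(\mathrm{UT}_{|I^c|})$. Product $\mu=\bigoplus_{n\ge i\ge0}\mathrm{Inf}^{\mathrm{UT}_n}_{\mathrm{UL}_{[i]}}\circ\mathrm{st}^{-1}_{([i],[i]^c)}$ where $\mathrm{Inf}\psi(lr)=\psi(l)$; coproduct $\Delta=\bigoplus_n\sum_{I\subseteq[n]}\mathrm{st}_{(I,I^c)}\circ\mathrm{Def}^{\mathrm{UP}_I}_{\mathrm{UL}_I}\circ\mathrm{Res}^{\mathrm{UT}_n}_{\mathrm{UP}_I}$ where $\mathrm{Def}^{\mathrm{UP}_I}_{\mathrm{UL}_I}\psi(g)=\frac1{|\mathrm{UR}_I|}\sum_{x\in\mathrm{UR}_I}\psi(gx)$. *)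

(* Defs.v *)
From HB Require Import structures.
From mathcomp Require Import all_boot all_order all_algebra all_field.
Set Implicit Arguments. Unset Strict Implicit. Unset Printing Implicit Defensive.
Import GRing.Theory Num.Theory.
Local Open Scope ring_scope.

(* Indices are 0-based: [n] is 'I_n. *)

Section Defs.
Variable F : finFieldType.

Definition UT (n : nat) : {set 'M[F]_n} :=
  [set g : 'M[F]_n | [forall i : 'I_n, forall j : 'I_n,
     (j <= i)%N ==> (g i j == (i == j)%:R)]].

Definition GL (n : nat) : {set 'M[F]_n} := [set g : 'M[F]_n | g \in unitmx].

(* psi is a class function of the group G (extended by 0 outside G) *)
Definition is_cf (n : nat) (G : {set 'M[F]_n}) (psi : 'M[F]_n -> algC) : Prop :=
  (forall g, g \notin G -> psi g = 0) /\
  (forall g h, g \in G -> h \in G -> psi (invmx h *m g *m h) = psi g).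

(* cf(UT_a) (x) cf(UT_b), identified with cf(UT_a x UT_b) *)
Definition is_cf2 (a b : nat) (Phi : 'M[F]_a -> 'M[F]_b -> algC) : Prop :=
  (forall y, is_cf (UT a) (fun x => Phi x y)) /\ (forall x, is_cf (UT b) (Phi x)).

Definition dag (n : nat) (x : 'M[F]_n) : 'M[F]_n :=
  \matrix_(r, s) x (rev_ord s) (rev_ord r).

Definition dmap (n : nat) (psi : 'M[F]_n -> algC) : 'M[F]_n -> algC :=
  fun g => psi (dag g).

Definition UL (n : nat) (I : {set 'I_n}) : {set 'M[F]_n} :=
  [set g in UT n | [forall i : 'I_n, forall j : 'I_n,
     ((g - 1%:M) i j != 0) ==> ((i \in I) == (j \in I))]].

Definition UR (n : nat) (I : {set 'I_n}) : {set 'M[F]_n} :=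
  [set g in UT n | [forall i : 'I_n, forall j : 'I_n,
     ((g - 1%:M) i j != 0) ==> ((i \in I) && (j \notin I))]].

Definition UP (n : nat) (I : {set 'I_n}) : {set 'M[F]_n} :=
  [set g in UT n | [forall i : 'I_n, forall j : 'I_n,
     ((i \notin I) && (j \in I)) ==> ((g - 1%:M) i j == 0)]].

(* cano_I : I -> [|I|], order preserving (0-based) *)
Definition cano (n : nat) (I : {set 'I_n}) (i : 'I_n) : nat :=
  #|[set k in I | (k < i)%N]|.

Definition relab (n a : nat) (I : {set 'I_n}) (l : 'M[F]_n) (x : 'M[F]_a) : bool :=
  [forall i in I, forall j in I, forall r : 'I_a, forall s : 'I_a,
     ((cano I i == r) && (cano I j == s)) ==> (l i j == x r s)].

Definition st (n a b : nat) (I : {set 'I_n}) (f : 'M[F]_n -> algC)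
    (x : 'M[F]_a) (y : 'M[F]_b) : algC :=
  \sum_(l in UL I | relab I l x && relab (~: I) l y) f l.

Definition st_inv (n a b : nat) (I : {set 'I_n}) (Phi : 'M[F]_a -> 'M[F]_b -> algC)
    (l : 'M[F]_n) : algC :=
  if l \in UL I then
    \sum_(x : 'M[F]_a) \sum_(y : 'M[F]_b | relab I l x && relab (~: I) l y) Phi x y
  else 0.

(* Inf^{UT_n}_{UL_I} psi (l r) = psi l, for l in UL_I, r in UR_I *)
Definition Inf (n : nat) (I : {set 'I_n}) (f : 'M[F]_n -> algC) (g : 'M[F]_n) : algC :=
  \sum_(l in UL I) \sum_(r in UR I | g == l *m r) f l.

Definition Res (n : nat) (I : {set 'I_n}) (psi : 'M[F]_n -> algC) : 'M[F]_n -> algC :=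
  fun g => if g \in UP I then psi g else 0.

Definition Def (n : nat) (I : {set 'I_n}) (f : 'M[F]_n -> algC) : 'M[F]_n -> algC :=
  fun g => if g \in UL I then
             (#|UR I|%:R)^-1 * \sum_(r in UR I) f (g *m r)
           else 0.

Definition initI (n i : nat) : {set 'I_n} := [set k : 'I_n | (k < i)%N].

(* product, component cf(UT_a) (x) cf(UT_b) -> cf(UT_n), used with a + b = n *)
Definition mu (n a b : nat) (Phi : 'M[F]_a -> 'M[F]_b -> algC) : 'M[F]_n -> algC :=
  Inf (initI n a) (st_inv (initI n a) Phi).

(* coproduct, component cf(UT_n) -> cf(UT_a) (x) cf(UT_b), used with a + b = n *)
Definition Delta (n a b : nat) (psi : 'M[F]_n -> algC) (x : 'M[F]_a) (y : 'M[F]_b)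
    : algC :=
  \sum_(I : {set 'I_n} | #|I| == a) st I (Def I (Res I psi)) x y.

Definition IndGU (n : nat) (psi : 'M[F]_n -> algC) (g : 'M[F]_n) : algC :=
  if g \in GL n then
    (#|UT n|%:R)^-1 *
      \sum_(h in GL n) (let k := invmx h *m g *m h in if k \in UT n then psi k else 0)
  else 0.

End Defs.

(* Main.v *)
Require Import Defs.
From HB Require Import structures.
From mathcomp Require Import all_boot all_order all_algebra all_field.
From mathcomp Require Import zify.
From Stdlib Require Import FunctionalExtensionality.
Import GRing.Theory Num.Theory.
Local Open Scope ring_scope.

Set Implicit Arguments. Unset Strict Implicit. Unset Printing Implicit Defensive.

Section NilS.
Variable F : fieldType.

Lemma transfer_sim m n (Q : 'M[F]_(m, n)) (A : 'M_n) (B : 'M_m) (PB : 'M_m) :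
  row_free Q -> row_full Q -> Q *m A = B *m Q -> PB \in unitmx ->
  PB *m B = B^T *m PB ->
  (Q^T *m PB *m Q) \in unitmx /\ (Q^T *m PB *m Q) *m A = A^T *m (Q^T *m PB *m Q).
Proof.
move=> fQ uQ QA uPB PBB; split.
  have mn : m = n by rewrite -(eqP fQ) (eqP uQ).
  rewrite -row_full_unit /row_full mxrankMfree // -mxrank_tr trmx_mul trmxK.
  by rewrite mxrankMfree // mxrank_tr mxrank_unit // mn.
rewrite -!mulmxA QA !mulmxA -(mulmxA _ PB) PBB.
by rewrite !mulmxA -trmx_mul -QA trmx_mul.
Qed.

Lemma sum_single k (c : 'I_k -> F) j0 :
  (forall j, j != j0 -> c j = 0) -> \sum_j c j = c j0.
Proof. by move=> H; rewrite (bigD1 j0) //= big1 ?addr0 // => j /andP[_ /H]. Qed.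

Lemma sum_deltaL k (p : nat) (X : 'I_k -> F) (Y : nat -> F) :
  (forall q : 'I_k, X q = Y q) -> ((k <= p)%N -> Y p = 0) ->
  \sum_(q < k) (((q : nat) == p)%:R * X q) = Y p.
Proof.
move=> XY Y0; case: (ltnP p k) => [pk|kp].
  rewrite (@sum_single _ _ (Ordinal pk)) /= ?eqxx ?mul1r ?XY //.
  by move=> j jn; rewrite (_ : (j : nat) == p = false) ?mul0r //; apply/negbTE; apply: contra jn => /eqP e; apply/eqP/val_inj.
rewrite big1 ?Y0 // => q _; rewrite (_ : (q : nat) == p = false) ?mul0r //.
by apply/negbTE; rewrite neq_ltn (leq_trans (ltn_ord q) kp).
Qed.

Lemma sum_deltaR k (p : nat) (X : 'I_k -> F) (Y : nat -> F) :
  (forall q : 'I_k, X q = Y q) -> ((k <= p)%N -> Y p = 0) ->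
  \sum_(q < k) (X q * ((q : nat) == p)%:R) = Y p.
Proof. by move=> XY Y0; rewrite -(sum_deltaL XY Y0); apply: eq_bigr => q _; rewrite mulrC. Qed.

Lemma mx_nonzero m n (A : 'M[F]_(m, n)) : A != 0 -> exists i j, A i j != 0.
Proof.
move=> A0; case/boolP: [exists i, exists j, A i j != 0] => [/existsP[i /existsP[j H]]|H].
  by exists i, j.
case/eqP: A0; apply/matrixP => i j; rewrite mxE; apply/eqP.
by move: H; rewrite negb_exists => /forallP/(_ i); rewrite negb_exists => /forallP/(_ j); rewrite negbK.
Qed.

Lemma pow_nil_ge n (N : 'M[F]_n) k m : N ^+ k = 0 -> (k <= m)%N -> N ^+ m = 0.
Proof. by move=> Nk km; rewrite -(subnK km) exprD Nk mulr0. Qed.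

Theorem nil_sim : forall n (N : 'M[F]_n), (exists k, N ^+ k = 0) ->
  exists P, P \in unitmx /\ P *m N = N^T *m P.
Proof.
elim/ltn_ind => n IH N [k0 Nk0].
case/boolP: (N == 0) => [/eqP ->|N0].
  by exists 1%:M; rewrite unitmx1 trmx0 mulmx0 mul0mx.
have [i0 [j0 _]] := mx_nonzero N0.
have n0 : (0 < n)%N by case: (n) i0 => // [[]].
have exk : exists k, N ^+ k == 0 by exists k0; rewrite Nk0.
case: (ex_minnP exk) => k /eqP Nk kmin.
case: k Nk kmin => [|k'] Nk kmin.
  by case/eqP: N0; rewrite -[N]mul1r -(expr0 N) Nk mul0r.
set k := k'.+1.
have Nk'0 : N ^+ k' != 0 by apply/negP => /kmin; rewrite ltnn.
have [i [j cij]] := mx_nonzero Nk'0.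
set c := (N ^+ k') i j.
pose v : 'rV[F]_n := delta_mx 0 i.
pose f : 'cV[F]_n := c^-1 *: delta_mx j 0.
have Nge : forall m, (k <= m)%N -> N ^+ m = 0 by move=> m; apply: pow_nil_ge.
have vf : (v *m N ^+ k' *m f) 0 0 = 1.
  rewrite /f -scalemxAr mxE -rowE -colE !mxE -/c mulVf //.
pose Cb : 'M[F]_(k, n) := \matrix_(p < k) (v *m N ^+ p).
pose K : 'M[F]_(n, k) := \matrix_(q < n, p < k) (N ^+ p *m f) q 0.
have GE : forall p q : 'I_k, (Cb *m K) p q = (v *m N ^+ (p + q) *m f) 0 0.
  move=> p q; rewrite exprD -mulmxE mulmxA -(mulmxA _ _ f) !mxE.
  by apply: eq_bigr => l _; rewrite !mxE.
pose R : 'M[F]_k := \matrix_(p, q) ((p + q == k')%N)%:R.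
pose S : 'M[F]_k := \matrix_(p, q) (((q : nat) == p.+1)%N)%:R.
set G := Cb *m K.
have addeq : forall p l : nat, (p <= k')%N -> ((p + l)%N == k') = (l == k' - p)%N.
  by move=> p l h; rewrite -{1}(subnKC h) eqn_add2l.
have RGE : forall p q : 'I_k, (R *m G) p q = (v *m N ^+ (k' - p + q) *m f) 0 0.
  move=> p q; rewrite mxE.
  have pk : (p <= k')%N by rewrite -ltnS.
  under eq_bigr => l _ do rewrite mxE (addeq _ _ pk).
  apply: (@sum_deltaL _ _ (fun l => G l q) (fun m => (v *m N ^+ (m + q) *m f) 0 0)).
    by move=> l; rewrite GE.
  by rewrite leqNgt ltnS leq_subr.
have Gunit : G \in unitmx.
  have RGt : is_trig_mx (R *m G).
    apply/is_trig_mxP => p q pq; rewrite RGE Nge ?mulmx0 ?mul0mx ?mxE //.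
    move: (ltn_ord p) pq; rewrite /k; move: (p : nat) (q : nat) => a b; lia.
  have : \det (R *m G) = 1.
    rewrite det_trig // big1 // => p _.
    have pk : (p <= k')%N by rewrite -ltnS.
    by rewrite RGE subnK.
  move=> dRG; have : R *m G \in unitmx by rewrite unitmxE dRG unitr1.
  by rewrite unitmx_mul => /andP[].
have rCb : \rank Cb = k.
  apply/eqP; rewrite eqn_leq rank_leq_row /= -{1}(mxrank_unit Gunit).
  exact: mxrankM_maxl.
have rK : \rank K = k.
  apply/eqP; rewrite eqn_leq rank_leq_col /= -{1}(mxrank_unit Gunit).
  exact: mxrankM_maxr.
have kn : (k <= n)%N by rewrite -rCb rank_leq_col.
set W := kermx K.
have rW : \rank W = (n - k)%N by rewrite mxrank_ker rK.
pose rb := row_base W.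
have rbW : (rb <= W)%MS by rewrite /rb eq_row_base.
have rbK : rb *m K = 0 by apply/sub_kermxP.
have cap0 : (Cb :&: rb)%MS = 0.
  apply/eqP; rewrite -submx0; apply/rV_subP => x.
  rewrite sub_capmx => /andP[/submxP[y ->] /submxP[z xz]].
  have : y *m Cb *m K = 0 by rewrite xz -mulmxA rbK mulmx0.
  rewrite -mulmxA -/G => /(congr1 (mulmx^~ (invmx G))).
  by rewrite mul0mx mulmxK // => ->; rewrite mul0mx sub0mx.
pose Q := col_mx Cb rb.
have rQ : \rank Q = (k + \rank W)%N.
  by rewrite /Q -addsmxE mxrank_disjoint_sum // rCb /rb eq_row_base.
have fQ : row_free Q by rewrite /row_free rQ.
have uQ : row_full Q by rewrite /row_full rQ rW subnKC.
have SCb : Cb *m N = S *m Cb.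
  apply/matrixP => p l.
  transitivity ((v *m N ^+ p *m N) 0 l).
    by rewrite !mxE; apply: eq_bigr => t _; rewrite !mxE.
  rewrite -mulmxA mulmxE -exprSr; symmetry. rewrite mxE.
  under eq_bigr => q _ do rewrite [S p q]mxE.
  apply: (@sum_deltaL _ _ (fun q => Cb q l) (fun m => (v *m N ^+ m) 0 l)).
    by move=> q; rewrite [LHS]mxE.
  by move=> km; rewrite Nge // mulmx0 mxE.
have NK : N *m K = K *m S^T.
  apply/matrixP => l q.
  transitivity ((N *m (N ^+ q *m f)) l 0).
    by rewrite !mxE; apply: eq_bigr => t _; rewrite !mxE.
  rewrite mulmxA mulmxE -exprS; symmetry. rewrite mxE.
  under eq_bigr => p _ do rewrite [S^T p q]mxE [S q p]mxE.
  apply: (@sum_deltaR _ _ (fun p => K l p) (fun m => (N ^+ m *m f) l 0)).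
    by move=> p; rewrite [LHS]mxE.
  by move=> km; rewrite Nge // mul0mx mxE.
have rbN : (rb *m N <= rb)%MS.
  have : (rb *m N <= W)%MS -> (rb *m N <= rb)%MS by rewrite /rb eq_row_base.
  apply; apply/sub_kermxP; by rewrite -mulmxA NK mulmxA rbK mul0mx.
pose N' := rb *m N *m pinvmx rb.
have N'rb : N' *m rb = rb *m N by rewrite /N' mulmxKpV.
have N'nil : N' ^+ k = 0.
  have pw : forall m, N' ^+ m *m rb = rb *m N ^+ m.
    elim => [|m IHm]; first by rewrite !expr0 mul1mx mulmx1.
    rewrite exprSr -mulmxE -mulmxA N'rb mulmxA IHm -mulmxA.
    by rewrite exprSr.
  apply: (row_free_inj (row_base_free W)); by rewrite /= pw Nk mulmx0 mul0mx.
have rWn : (\rank W < n)%N by rewrite rW; move: n0; rewrite /k; lia.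
have [P' [uP' P'N']] := IH (\rank W) rWn N' (ex_intro _ k N'nil).
pose B := block_mx S 0 0 N'.
pose PB := block_mx R 0 0 P'.
have RR : R *m R = 1%:M.
  apply/matrixP => p q; rewrite !mxE.
  have pk : (p <= k')%N by rewrite -ltnS.
  under eq_bigr => l _ do rewrite !mxE (addeq _ _ pk).
  rewrite (@sum_deltaL _ _ (fun l => (((l + q)%N == k'))%:R) (fun m => (((m + q)%N == k'))%:R)) //.
    rewrite -{2}(subnK pk) eqn_add2l eq_sym //.
  by rewrite leqNgt ltnS leq_subr.
have RS : R *m S = S^T *m R.
  apply/matrixP => p q; rewrite !mxE.
  transitivity ((((p + q)%N == k))%:R : F).
    case: q => [[|q'] hq] /=.
      rewrite big1 ?addn0 ?eqn_leq ?(leqNgt k) ?ltn_ord ?andbF // => l _.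
      by rewrite !mxE /= mulr0.
    have hq' : (q' < k)%N by apply: ltnW.
    rewrite (@sum_single _ _ (Ordinal hq')) /= ?mxE ?eqxx ?mulr1 ?addnS //.
    by move=> l; rewrite !mxE /= eqSS => ne; rewrite (_ : (q' == l) = false) ?mulr0 //; apply/negbTE; apply: contra ne => /eqP e; apply/eqP/val_inj; rewrite /= e.
  case: p => [[|p'] hp] /=.
    rewrite big1 ?add0n ?eqn_leq ?(leqNgt k) ?ltn_ord ?andbF // => l _.
    by rewrite !mxE /= mul0r.
  have hp' : (p' < k)%N by apply: ltnW.
  rewrite (@sum_single _ _ (Ordinal hp')) /= ?mxE ?eqxx ?mul1r ?addSn //.
  by move=> l; rewrite !mxE /= eqSS => ne; rewrite (_ : (p' == l) = false) ?mul0r //; apply/negbTE; apply: contra ne => /eqP e; apply/eqP/val_inj; rewrite /= e.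
have uR : R \in unitmx by case: (mulmx1_unit RR).
have uPB : PB \in unitmx.
  by rewrite unitmxE det_ublock unitrM -!unitmxE uR uP'.
have QNB : Q *m N = B *m Q.
  by rewrite /Q /B mul_col_mx mul_block_col !mul0mx addr0 add0r SCb N'rb.
have PBB : PB *m B = B^T *m PB.
  by rewrite /PB /B tr_block_mx !trmx0 !mulmx_block !mulmx0 !mul0mx !addr0 !add0r RS P'N'.
have [uP PN] := transfer_sim fQ uQ QNB uPB PBB.
by exists (Q^T *m PB *m Q).
Qed.

End NilS.


Section Basics.
Variable F : finFieldType.
Variable n : nat.
Notation rv := (@rev_ord n).
Implicit Types (A B g h l r : 'M[F]_n).

Lemma dagE (A : 'M[F]_n) i j : dag A i j = A (rv j) (rv i).
Proof. by rewrite mxE. Qed.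

Lemma dagK : involutive (@dag F n).
Proof. by move=> A; apply/matrixP => i j; rewrite !mxE !rev_ordK. Qed.

Lemma dag_inj : injective (@dag F n).
Proof. exact: inv_inj dagK. Qed.

Lemma dagM A B : dag (A *m B) = dag B *m dag A.
Proof.
apply/matrixP => i j; rewrite !mxE (reindex_inj rev_ord_inj) /=.
by apply: eq_bigr => k _; rewrite !mxE mulrC.
Qed.

Lemma dag1 : dag (1%:M : 'M[F]_n) = 1%:M.
Proof.
by apply/matrixP => i j; rewrite !mxE (inj_eq rev_ord_inj) eq_sym.
Qed.

Lemma dagB1 A : dag (A - 1%:M) = dag A - 1%:M.
Proof. by apply/matrixP => i j; rewrite !mxE (inj_eq rev_ord_inj) eq_sym. Qed.

Lemma dag_unit A : (dag A \in unitmx) = (A \in unitmx).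
Proof.
suff H : forall B, B \in unitmx -> dag B \in unitmx.
  by apply/idP/idP => [/H|/H//]; rewrite dagK.
move=> B uB; have : dag B *m dag (invmx B) = 1%:M by rewrite -dagM mulVmx // dag1.
by case/mulmx1_unit.
Qed.

Lemma inv_uniq A B : A *m B = 1%:M -> invmx A = B.
Proof.
move=> AB; have [uA _] := mulmx1_unit AB.
by rewrite -[RHS]mul1mx -(mulVmx uA) -mulmxA AB mulmx1.
Qed.

Lemma dag_inv A : invmx (dag A) = dag (invmx A).
Proof.
case/boolP: (A \in unitmx) => uA.
  by apply: inv_uniq; rewrite -dagM mulVmx // dag1.
rewrite !invmx_out // inE ?dag_unit //.
Qed.

Definition supp (R : 'I_n -> 'I_n -> bool) (A : 'M[F]_n) :=
  [forall i, forall j, (A i j != 0) ==> R i j].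

Lemma suppP (R : 'I_n -> 'I_n -> bool) A :
  reflect (forall i j, A i j != 0 -> R i j) (supp R A).
Proof.
apply: (iffP forallP) => [H i j|H i]; first by move: (H i) => /forallP/(_ j)/implyP.
by apply/forallP => j; apply/implyP/H.
Qed.

Lemma eq_supp (R1 R2 : 'I_n -> 'I_n -> bool) A :
  (forall i j, R1 i j = R2 i j) -> supp R1 A = supp R2 A.
Proof. by move=> E; apply/suppP/suppP => H i j /H; rewrite E. Qed.

Lemma supp_and (R1 R2 : 'I_n -> 'I_n -> bool) A :
  supp (fun i j => R1 i j && R2 i j) A = supp R1 A && supp R2 A.
Proof.
apply/suppP/andP => [H|[/suppP H1 /suppP H2] i j nz]; last by rewrite H1 ?H2.
by split; apply/suppP => i j /H /andP[].
Qed.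

Lemma sum_nz (m : nat) (c : 'I_m -> F) : \sum_k c k != 0 -> exists k, c k != 0.
Proof.
move=> nz; case/boolP: [exists k, c k != 0] => [/existsP//|/existsPn H].
by case/eqP: nz; apply: big1 => k _; move: (H k); rewrite negbK => /eqP.
Qed.

Lemma supp_mul (R1 R2 R3 : 'I_n -> 'I_n -> bool) A B :
  (forall i k j, R1 i k -> R2 k j -> R3 i j) ->
  supp R1 A -> supp R2 B -> supp R3 (A *m B).
Proof.
move=> H /suppP sA /suppP sB; apply/suppP => i j; rewrite mxE => /sum_nz[k].
by rewrite mulf_eq0 negb_or => /andP[/sA h1 /sB h2]; apply: H h1 h2.
Qed.

Lemma supp_add (R : 'I_n -> 'I_n -> bool) A B :
  supp R A -> supp R B -> supp R (A + B).
Proof.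
move=> /suppP sA /suppP sB; apply/suppP => i j; rewrite mxE.
case/boolP: (A i j == 0) => [/eqP -> | /sA //]; rewrite add0r; exact: sB.
Qed.

Lemma supp_dag (R : 'I_n -> 'I_n -> bool) A :
  supp R (dag A) = supp (fun i j => R (rv j) (rv i)) A.
Proof.
apply/suppP/suppP => H i j.
  by move=> nz; have := H (rv j) (rv i); rewrite dagE !rev_ordK => /(_ nz).
by rewrite dagE => /H; rewrite !rev_ordK.
Qed.

Lemma mem_rv (J : {set 'I_n}) j : (j \in [set rv x | x in J]) = (rv j \in J).
Proof.
apply/imsetP/idP => [[x xJ ->]|jJ]; first by rewrite rev_ordK.
by exists (rv j); rewrite ?rev_ordK.
Qed.

Definition Sset (R : 'I_n -> 'I_n -> bool) : {set 'M[F]_n} :=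
  [set g | supp R (g - 1%:M)].

Lemma Sset1 R : 1%:M \in Sset R.
Proof. by rewrite inE; apply/suppP => i j; rewrite subrr mxE eqxx. Qed.

Lemma SsetM (R : 'I_n -> 'I_n -> bool) g h :
  (forall i k j, R i k -> R k j -> R i j) ->
  g \in Sset R -> h \in Sset R -> g *m h \in Sset R.
Proof.
rewrite !inE => tr sg sh.
have -> : g *m h - 1%:M = (g - 1%:M) *m (h - 1%:M) + (g - 1%:M) + (h - 1%:M).
  rewrite mulmxBl !mulmxBr !mulmx1 mul1mx.
  by rewrite addrAC subrK addrA subrK.
by apply: supp_add => //; apply: supp_add => //; apply: supp_mul tr sg sh.
Qed.

Lemma Sset_unit (R : 'I_n -> 'I_n -> bool) g :
  (forall i j, R i j -> (i < j)%N) -> g \in Sset R -> g \in unitmx.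
Proof.
move=> Rlt; rewrite inE => /suppP sg.
have gE : forall i j : 'I_n, (j <= i)%N -> g i j = (i == j)%:R.
  move=> i j ji; apply/eqP; rewrite -subr_eq0.
  have := sg i j; rewrite !mxE => H; apply: contraLR ji => /H /Rlt.
  by rewrite -ltnNge.
rewrite -unitmx_tr unitmxE det_trig.
  by rewrite big1 ?unitr1 // => i _; rewrite mxE gE ?eqxx.
by apply/is_trig_mxP => i j ij; rewrite mxE gE ?(ltnW ij) // -val_eqE /= gtn_eqF.
Qed.

Lemma inv_closed (S : {set 'M[F]_n}) x :
  1%:M \in S -> (forall a b, a \in S -> b \in S -> a *m b \in S) ->
  x \in S -> x \in unitmx -> invmx x \in S.
Proof.
move=> S1 SM xS ux.
have inj : injective (@mulmx F n n n x) by move=> a b e; rewrite -(mulKmx ux a) e mulKmx.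
have sub : [set x *m y | y in S] \subset S by apply/subsetP => _ /imsetP[y yS ->]; apply: SM.
have eqS : [set x *m y | y in S] = S.
  by apply/eqP; rewrite eqEcard sub (card_imset _ inj) leqnn.
move: S1; rewrite -{1}eqS => /imsetP[y yS xy].
by rewrite (inv_uniq (esym xy)).
Qed.

Lemma Sset_inv (R : 'I_n -> 'I_n -> bool) g :
  (forall i k j, R i k -> R k j -> R i j) -> (forall i j, R i j -> (i < j)%N) ->
  g \in Sset R -> invmx g \in Sset R.
Proof.
move=> tr lt gS; apply: inv_closed => //; first exact: Sset1.
  by move=> a b; apply: SsetM.
exact: Sset_unit gS.
Qed.

Definition ltR := fun i j : 'I_n => (i < j)%N.

Lemma inUT g : (g \in UT F n) = (g \in Sset ltR).
Proof.
rewrite !inE; apply/forallP/suppP => [H i j|H i].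
  rewrite /ltR ltnNge; apply: contra => ji.
  move: (H i) => /forallP/(_ j)/implyP/(_ ji)/eqP.
  by rewrite !mxE => ->; rewrite subrr.
apply/forallP => j; apply/implyP => ji; apply/eqP/eqP; rewrite -subr_eq0.
have := H i j; rewrite !mxE => H'; apply: contraLR ji => /H'.
by rewrite /ltR -ltnNge.
Qed.

End Basics.


Section Blocks.
Variable F : finFieldType.
Variable n : nat.
Notation rv := (@rev_ord n).
Implicit Types (A B g h l r : 'M[F]_n) (I J : {set 'I_n}).

Lemma rv_lt (i j : 'I_n) : (rv j < rv i)%N = (i < j)%N.
Proof. have := ltn_ord i; have := ltn_ord j; rewrite /= => ? ?; apply/idP/idP; lia. Qed.

Definition ulR I := fun i j : 'I_n => ltR i j && ((i \in I) == (j \in I)).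
Definition urR I := fun i j : 'I_n => ltR i j && ((i \in I) && (j \notin I)).
Definition upR I := fun i j : 'I_n => ltR i j && ((i \in I) || (j \notin I)).

Lemma inUL I g : (g \in UL F I) = (g \in Sset F (ulR I)).
Proof. by rewrite in_set inUT !in_set /ulR supp_and. Qed.

Lemma inUR I g : (g \in UR F I) = (g \in Sset F (urR I)).
Proof. by rewrite in_set inUT !in_set /urR supp_and. Qed.

Lemma inUP I g : (g \in UP F I) = (g \in Sset F (upR I)).
Proof.
rewrite in_set inUT !in_set /upR supp_and; congr (_ && _).
apply/forallP/suppP => [H i j|H i].
  apply: contraR; rewrite negb_or negbK => hij.
  by move: (H i) => /forallP/(_ j)/implyP/(_ hij).
apply/forallP => j; apply/implyP => hij; apply: contraTT hij => /H.
by rewrite negb_and negbK orbC.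
Qed.

Lemma ulR_tr I i k j : ulR I i k -> ulR I k j -> ulR I i j.
Proof.
rewrite /ulR /ltR => /andP[ik h1] /andP[kj h2]; rewrite (ltn_trans ik kj) /=.
by move: h1 h2; case: (i \in I); case: (k \in I); case: (j \in I).
Qed.
Lemma urR_tr I i k j : urR I i k -> urR I k j -> urR I i j.
Proof.
rewrite /urR /ltR => /andP[ik h1] /andP[kj h2]; rewrite (ltn_trans ik kj) /=.
by move: h1 h2; case: (i \in I); case: (k \in I); case: (j \in I).
Qed.
Lemma upR_tr I i k j : upR I i k -> upR I k j -> upR I i j.
Proof.
rewrite /upR /ltR => /andP[ik h1] /andP[kj h2]; rewrite (ltn_trans ik kj) /=.
by move: h1 h2; case: (i \in I); case: (k \in I); case: (j \in I).
Qed.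

Lemma ulR_lt I i j : ulR I i j -> (i < j)%N. Proof. by case/andP. Qed.
Lemma urR_lt I i j : urR I i j -> (i < j)%N. Proof. by case/andP. Qed.
Lemma upR_lt I i j : upR I i j -> (i < j)%N. Proof. by case/andP. Qed.
Lemma ltR_tr (i k j : 'I_n) : ltR i k -> ltR k j -> ltR i j. Proof. exact: ltn_trans. Qed.

Lemma UT_mul g h : g \in UT F n -> h \in UT F n -> g *m h \in UT F n.
Proof. rewrite !inUT; apply: SsetM; exact: ltR_tr. Qed.
Lemma UT_inv g : g \in UT F n -> invmx g \in UT F n.
Proof. rewrite !inUT; apply: Sset_inv; [exact: ltR_tr | by []]. Qed.
Lemma UT_unit g : g \in UT F n -> g \in unitmx.
Proof. rewrite inUT; apply: Sset_unit; by []. Qed.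
Lemma UT1 : 1%:M \in UT F n.
Proof. by rewrite inUT Sset1. Qed.

Lemma UL_mul I g h : g \in UL F I -> h \in UL F I -> g *m h \in UL F I.
Proof. rewrite !inUL; apply: SsetM; exact: ulR_tr. Qed.
Lemma UL_inv I g : g \in UL F I -> invmx g \in UL F I.
Proof. rewrite !inUL; apply: Sset_inv; [exact: ulR_tr | exact: ulR_lt]. Qed.
Lemma UL_UT I g : g \in UL F I -> g \in UT F n.
Proof. by rewrite in_set => /andP[]. Qed.
Lemma UR_UT I g : g \in UR F I -> g \in UT F n.
Proof. by rewrite in_set => /andP[]. Qed.
Lemma UP_UT I g : g \in UP F I -> g \in UT F n.
Proof. by rewrite in_set => /andP[]. Qed.
Lemma UP_mul I g h : g \in UP F I -> h \in UP F I -> g *m h \in UP F I.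
Proof. rewrite !inUP; apply: SsetM; exact: upR_tr. Qed.

Lemma Sset_sub (R1 R2 : 'I_n -> 'I_n -> bool) g :
  (forall i j, R1 i j -> R2 i j) -> g \in Sset F R1 -> g \in Sset F R2.
Proof. by move=> H; rewrite !in_set => /suppP S1; apply/suppP => i j /S1 /H. Qed.

Lemma UL_UP I g : g \in UL F I -> g \in UP F I.
Proof.
rewrite inUL inUP; apply: Sset_sub => i j /andP[h1 h2]; rewrite /upR h1 /=; move: h2.
by case: (i \in I); case: (j \in I).
Qed.
Lemma UR_UP I g : g \in UR F I -> g \in UP F I.
Proof.
rewrite inUR inUP; apply: Sset_sub => i j /andP[h1 h2]; rewrite /upR h1 /=; move: h2.
by case: (i \in I); case: (j \in I).
Qed.

Lemma ULC I : UL F (~: I) = UL F I.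
Proof.
apply/setP => g; rewrite !inUL !in_set; apply: eq_supp => i j.
by rewrite /ulR !inE; case: (i \in I); case: (j \in I).
Qed.

Lemma dag_UT g : (dag g \in UT F n) = (g \in UT F n).
Proof.
rewrite !inUT !in_set -dagB1 supp_dag; apply: eq_supp => i j.
by rewrite /ltR rv_lt.
Qed.

Lemma dag_UL J l : (dag l \in UL F J) = (l \in UL F [set rv x | x in J]).
Proof.
rewrite !inUL !in_set -dagB1 supp_dag; apply: eq_supp => i j.
by rewrite /ulR /ltR rv_lt !mem_rv eq_sym.
Qed.

Lemma dag_UR J r : (dag r \in UR F J) = (r \in UR F (~: [set rv x | x in J])).
Proof.
rewrite !inUR !in_set -dagB1 supp_dag; apply: eq_supp => i j.
rewrite /urR /ltR rv_lt !inE !mem_rv.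
by case: (i < j)%N; case: (rv j \in J); case: (rv i \in J).
Qed.

Lemma dag_UP J g : (dag g \in UP F J) = (g \in UP F (~: [set rv x | x in J])).
Proof.
rewrite !inUP !in_set -dagB1 supp_dag; apply: eq_supp => i j.
by rewrite /upR /ltR rv_lt !inE !mem_rv negbK orbC.
Qed.

Lemma supp_of_sub1 (R R' : 'I_n -> 'I_n -> bool) g :
  (forall i, R' i i) -> (forall i j, R i j -> R' i j) ->
  supp R (g - 1%:M) -> supp R' g.
Proof.
move=> refl sub /suppP H; apply/suppP => i j nz.
case: (eqVneq i j) => [-> // | ne]; apply: sub; apply: H.
by rewrite !mxE (negbTE ne) subr0.
Qed.

Lemma conj_UR I l r : l \in UL F I -> r \in UR F I ->
  l *m r *m invmx l \in UR F I.
Proof.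
move=> lU rU.
have ul : l \in unitmx by apply: UT_unit; apply: UL_UT lU.
have li : invmx l \in UL F I by apply: UL_inv.
pose ulE := fun i j : 'I_n => (i <= j)%N && ((i \in I) == (j \in I)).
have sE : forall g, g \in UL F I -> supp ulE g.
  move=> g; rewrite inUL in_set; apply: supp_of_sub1 => [i|i j /andP[h1 h2]].
    by rewrite /ulE leqnn eqxx.
  by rewrite /ulE (ltnW h1) h2.
rewrite inUR in_set.
have -> : l *m r *m invmx l - 1%:M = l *m (r - 1%:M) *m invmx l.
  by rewrite mulmxBr mulmx1 mulmxBl mulmxV.
move: rU; rewrite inUR in_set => rU.
apply: (supp_mul (R1 := urR I)) (sE _ li); last first.
  apply: (supp_mul (R1 := ulE)) (sE _ lU) rU.
  move=> i k j /andP[ik h1] /andP[kj h2]; rewrite /urR /ltR (leq_ltn_trans ik kj) /=.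
  by move: h1 h2; case: (i \in I); case: (k \in I); case: (j \in I).
move=> i k j /andP[ik h1] /andP[kj h2]; rewrite /urR /ltR (leq_trans ik kj) /=.
by move: h1 h2; case: (i \in I); case: (k \in I); case: (j \in I).
Qed.

Lemma conj_URE I l r : l \in UL F I ->
  (l *m r *m invmx l \in UR F I) = (r \in UR F I).
Proof.
move=> lU; apply/idP/idP => [h|]; last exact: conj_UR.
have ul : l \in unitmx by apply: UT_unit; apply: UL_UT lU.
have := conj_UR (UL_inv lU) h; rewrite invmxK.
by rewrite !mulmxA mulVmx // mul1mx -mulmxA mulVmx // mulmx1.
Qed.

End Blocks.


Section Relab.
Variable F : finFieldType.
Variable n : nat.
Notation rv := (@rev_ord n).
Implicit Types (A B g h l r : 'M[F]_n) (I J : {set 'I_n}).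

Lemma rvK I : [set rv x | x in [set rv x | x in I]] = I.
Proof. by apply/setP => i; rewrite !mem_rv rev_ordK. Qed.

Lemma rvC I : [set rv x | x in ~: I] = ~: [set rv x | x in I].
Proof. by apply/setP => i; rewrite !inE !mem_rv inE. Qed.

Lemma card_rv I : #|[set rv x | x in I]| = #|I|.
Proof. exact: card_imset rev_ord_inj. Qed.

Lemma cano_key I i : i \in I ->
  (cano [set rv x | x in I] (rv i) + cano I i + 1 = #|I|)%N.
Proof.
move=> iI; rewrite /cano.
have E1 : [set k in [set rv x | x in I] | (k < rv i)%N] =
          [set rv x | x in [set k in I | (i < k)%N]].
  apply/setP => k; rewrite !inE !mem_rv inE; congr (_ && _).
  have := ltn_ord i; have := ltn_ord k; rewrite /= => ? ?; apply/idP/idP; lia.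
rewrite E1 card_rv -(cardsID [set k : 'I_n | (k < i)%N] I).
have E2 : I :&: [set k : 'I_n | (k < i)%N] = [set k in I | (k < i)%N].
  by apply/setP => k; rewrite !inE.
have E3 : I :\: [set k : 'I_n | (k < i)%N] = i |: [set k in I | (i < k)%N].
  apply/setP => k; rewrite !inE; case: (eqVneq k i) => [-> | ne] /=.
    by rewrite ltnn iI.
  rewrite -leqNgt leq_eqVlt; case: (k \in I); rewrite ?andbF //=.
  by rewrite val_eqE eq_sym (negbTE ne) andbT.
rewrite E2 E3 cardsU1 inE ltnn andbF /= addn1 add1n addnS; congr (_.+1); exact: addnC.
Qed.

Lemma relabP k I l (x : 'M[F]_k) :
  reflect (forall i j (r s : 'I_k), i \in I -> j \in I ->
             cano I i = r -> cano I j = s -> l i j = x r s)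
          (relab I l x).
Proof.
apply: (iffP forallP) => [H i j r s iI jI ir js | H i].
  move: (H i) => /implyP/(_ iI)/forallP/(_ j)/implyP/(_ jI)/forallP/(_ r).
  move=> /forallP/(_ s)/implyP; rewrite ir js !eqxx => /(_ isT)/eqP //.
apply/implyP => iI; apply/forallP => j; apply/implyP => jI.
apply/forallP => r; apply/forallP => s; apply/implyP => /andP[/eqP ir /eqP js].
by apply/eqP; apply: H.
Qed.

Lemma relab_dag1 k I l (x : 'M[F]_k) : #|I| = k ->
  relab I l x -> relab [set rv x | x in I] (dag l) (dag x).
Proof.
move=> cI /relabP H; apply/relabP => i' j' r s iI jI ir js.
rewrite !dagE; rewrite mem_rv in iI; rewrite mem_rv in jI; apply: H => //.
  have := cano_key jI; rewrite rev_ordK js cI /=; lia.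
have := cano_key iI; rewrite rev_ordK ir cI /=; lia.
Qed.

Lemma relab_dag k I l (x : 'M[F]_k) : #|I| = k ->
  relab [set rv x | x in I] (dag l) (dag x) = relab I l x.
Proof.
move=> cI; apply/idP/idP; last exact: relab_dag1.
move=> h; rewrite -(dagK l) -(dagK x) -[I]rvK; apply: relab_dag1 => //.
by rewrite card_rv.
Qed.

Lemma card_initI a : (a <= n)%N -> #|initI n a| = a.
Proof.
move=> an.
have -> : initI n a = [set widen_ord an k | k in [set: 'I_a]].
  apply/setP => k; rewrite inE; apply/idP/imsetP => [ka|[k' _ ->]]; last exact: (ltn_ord k').
  by exists (Ordinal ka) => //; apply: val_inj.
have inj : injective (widen_ord an) by move=> u v /(congr1 val) /= /val_inj.
by rewrite (card_imset _ inj) cardsT card_ord.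
Qed.

Lemma rv_initI a b : (a + b)%N = n ->
  [set rv x | x in initI n b] = ~: initI n a.
Proof.
move=> abn; apply/setP => k; rewrite mem_rv !inE.
have := ltn_ord k; rewrite /= => ?; apply/idP/idP; lia.
Qed.

End Relab.


Section Parts.
Variable F : finFieldType.

Lemma dmap_cf n (psi : 'M[F]_n -> algC) :
  is_cf (UT F n) psi -> is_cf (UT F n) (dmap psi).
Proof.
case=> H0 Hc; split => [g gU|g h gU hU]; rewrite /dmap.
  by apply: H0; rewrite dag_UT.
have uh := UT_unit hU.
have mU : dag (invmx h) \in UT F n by rewrite dag_UT UT_inv.
have -> : dag (invmx h *m g *m h) = invmx (dag (invmx h)) *m dag g *m dag (invmx h).
  by rewrite dag_inv invmxK !dagM mulmxA.
by apply: Hc => //; rewrite dag_UT.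
Qed.

Lemma sum_conj n I (l g : 'M[F]_n) (C : algC) : l \in UL F I ->
  \sum_(r in UR F I | g == r *m l) C = \sum_(r in UR F I | g == l *m r) C.
Proof.
move=> lU; have ul : l \in unitmx by apply: UT_unit; apply: UL_UT lU.
have inj : injective (fun r : 'M[F]_n => l *m r *m invmx l).
  move=> u v /(congr1 (fun X => invmx l *m X *m l)).
  by rewrite !mulmxA !mulVmx // !mul1mx -!mulmxA !mulVmx // !mulmx1.
rewrite (reindex_inj inj) /=; apply: eq_bigl => r.
by rewrite conj_URE // -[l *m r *m invmx l *m l]mulmxA mulVmx // mulmx1.
Qed.

Lemma part4 n a b (Phi : 'M[F]_a -> 'M[F]_b -> algC) : (a + b)%N = n ->
  forall g : 'M[F]_n,
    @mu F n a b (fun x y => Phi (dag x) (dag y)) g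
    = dmap (@mu F n b a (fun y x => Phi x y)) g.
Proof.
move=> abn g; rewrite /mu /dmap /Inf.
set I := initI n a; set J := initI n b.
have JI : [set rev_ord x | x in J] = ~: I := rv_initI abn.
have J' : J = [set rev_ord x | x in ~: I] by rewrite -JI rvK.
have Jc : ~: J = [set rev_ord x | x in I] by rewrite J' rvC setCK.
have an : (a <= n)%N by rewrite -abn leq_addr.
have cI : #|I| = a := card_initI an.
have cIc : #|~: I| = b.
  by have := cardsC I; rewrite card_ord cI; lia.
rewrite [RHS](reindex_inj (@dag_inj F n)) /=.
apply: eq_big => [l|l lU]; first by rewrite dag_UL JI ULC.
rewrite [RHS](reindex_inj (@dag_inj F n)) /=.
rewrite -sum_conj //.
rewrite [RHS](eq_bigl (fun r => (r \in UR F I) && (g == r *m l))); last first.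
  by move=> r; rewrite dag_UR JI setCK -dagM (inj_eq (@dag_inj F n)).
apply: eq_bigr => r _.
rewrite /st_inv dag_UL JI ULC lU.
rewrite [RHS](reindex_inj (@dag_inj F b)) /=.
under [RHS]eq_bigr => y _ do rewrite (reindex_inj (@dag_inj F a)) /=.
have E1 : forall y : 'M[F]_b, relab J (dag l) (dag y) = relab (~: I) l y.
  by move=> y; rewrite J' relab_dag.
have E2 : forall x : 'M[F]_a, relab (~: J) (dag l) (dag x) = relab I l x.
  by move=> x; rewrite Jc relab_dag.
under [RHS]eq_bigr => y _ do under eq_bigl => x do rewrite E1 E2.
rewrite [LHS](eq_bigr _ (fun x _ => big_mkcond _ _)).
rewrite [RHS](eq_bigr _ (fun y _ => big_mkcond _ _)) exchange_big /=.
by apply: eq_bigr => x _; apply: eq_bigr => y _; rewrite andbC.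
Qed.

Lemma part5 n a b (psi : 'M[F]_n -> algC) : (a + b)%N = n -> is_cf (UT F n) psi ->
  forall (x : 'M[F]_a) (y : 'M[F]_b),
    @Delta F n a b (dmap psi) x y = @Delta F n b a psi (dag y) (dag x).
Proof.
move=> abn cf x y; rewrite /Delta.
pose hs := fun I : {set 'I_n} => [set rev_ord x | x in ~: I].
have hsK : involutive hs by move=> I; rewrite /hs rvC rvK setCK.
rewrite [RHS](reindex_inj (inv_inj hsK)) /=.
apply: eq_big => [I|I /eqP cI].
  rewrite /hs card_rv; have := cardsC I; rewrite card_ord => h.
  have h2 : (#|I| + #|~: I| = a + b)%N by rewrite h abn.
  by rewrite -[X in _ = X](eqn_add2l #|I|) h2 eqn_add2r.
have cIc : #|~: I| = b by have := cardsC I; rewrite card_ord cI; lia.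
have JrvI : [set rev_ord x | x in hs I] = ~: I by rewrite /hs rvK.
have Jc : ~: hs I = [set rev_ord x | x in I] by rewrite /hs rvC setCK.
rewrite /st [RHS](reindex_inj (@dag_inj F n)) /=.
apply: eq_big => [l|l /andP[lU _]].
  rewrite dag_UL JrvI ULC {1}/hs relab_dag // Jc relab_dag //.
  by congr (_ && _); apply: andbC.
rewrite /Def dag_UL JrvI ULC lU.
have ul : l \in unitmx by apply: UT_unit; apply: UL_UT lU.
congr (_ * _).
  have -> : UR F (hs I) = [set dag r | r in UR F I].
    apply/setP => r; apply/idP/imsetP => [rU|[r' rU ->]].
      by exists (dag r); rewrite ?dagK //; move: (dag_UR (hs I) (dag r)); rewrite dagK JrvI setCK => <-.
    by rewrite dag_UR JrvI setCK.
  by rewrite card_imset //; exact: dag_inj.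
rewrite [RHS](reindex_inj (@dag_inj F n)) /=.
apply: eq_big => [r|r rU]; first by rewrite dag_UR JrvI setCK.
rewrite /Res -dagM dag_UP JrvI setCK.
rewrite (UP_mul (UL_UP lU) (UR_UP rU)) (UP_mul (UR_UP rU) (UL_UP lU)).
have [_ cf2] := dmap_cf cf.
have lrU : l *m r \in UT F n by apply: UT_mul; [apply: UL_UT lU | apply: UR_UT rU].
have := cf2 (l *m r) l lrU (UL_UT lU).
rewrite mulmxA mulVmx // mul1mx /dmap => <- //.
Qed.

Lemma strict_pow n (N : 'M[F]_n) : supp (@ltR n) N ->
  forall m (i j : 'I_n), (j < i + m)%N -> (N ^+ m) i j = 0.
Proof.
move=> /suppP sN; elim => [|m IH] i j.
  rewrite addn0 expr0 => ji; rewrite mxE; case: eqP => // e.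
  by move: ji; rewrite e ltnn.
move=> jim; rewrite exprSr mxE big1 // => k _.
case: (ltnP k (i + m)) => [kim|kim]; first by rewrite IH // mul0r.
case/boolP: (N k j == 0) => [/eqP -> | /sN]; first by rewrite mulr0.
rewrite /ltR => kj; move: jim; rewrite addnS ltnS => jim.
by have := leq_trans jim kim; rewrite leqNgt kj.
Qed.

Lemma UT_nil n (u : 'M[F]_n) : u \in UT F n -> (u - 1%:M) ^+ n = 0.
Proof.
rewrite inUT in_set => su; apply/matrixP => i j; rewrite mxE strict_pow //.
by rewrite (leq_trans (ltn_ord j)) // leq_addl.
Qed.

Definition Wm n : 'M[F]_n := \matrix_(i, j) ((rev_ord i == j))%:R.

Lemma WmL n (A : 'M[F]_n) i j : (Wm n *m A) i j = A (rev_ord i) j.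
Proof.
rewrite mxE (bigD1 (rev_ord i)) //= big1 ?addr0; first by rewrite mxE eqxx mul1r.
by move=> k ne; rewrite mxE eq_sym (negbTE ne) mul0r.
Qed.

Lemma WmR n (A : 'M[F]_n) i j : (A *m Wm n) i j = A i (rev_ord j).
Proof.
rewrite mxE (bigD1 (rev_ord j)) //= big1 ?addr0; first by rewrite mxE rev_ordK eqxx mulr1.
move=> k ne; rewrite mxE (_ : (rev_ord k == j) = false) ?mulr0 //.
by apply/negbTE; apply: contra ne => /eqP <-; rewrite rev_ordK.
Qed.

Lemma dag_W n (A : 'M[F]_n) : dag A = Wm n *m A^T *m Wm n.
Proof. by apply/matrixP => i j; rewrite WmR WmL !mxE. Qed.

Lemma WW n : Wm n *m Wm n = 1%:M.
Proof.
by apply/matrixP => i j; rewrite WmL !mxE rev_ordK.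
Qed.

Lemma sim_dag n (u : 'M[F]_n) : u \in UT F n ->
  exists Q, Q \in unitmx /\ dag u = invmx Q *m u *m Q.
Proof.
move=> uU; have [P [uP PN]] := nil_sim (ex_intro _ n (UT_nil uU)).
have Pu : P *m u = u^T *m P.
  move: PN; rewrite mulmxBr mulmx1 linearB /= trmx1 mulmxBl mul1mx.
  by move/(congr1 (fun X => X + P)); rewrite !subrK.
have uW : Wm n \in unitmx by case: (mulmx1_unit (WW n)).
exists (invmx P *m Wm n); split; first by rewrite unitmx_mul unitmx_inv uP.
have -> : invmx (invmx P *m Wm n) = Wm n *m P.
  by apply: inv_uniq; rewrite -mulmxA (mulmxA (Wm n)) WW mul1mx mulVmx.
by rewrite dag_W -!mulmxA (mulmxA P) Pu -!mulmxA (mulmxA P) mulmxV // mul1mx.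
Qed.

Lemma invmxM' n (A B : 'M[F]_n) : A \in unitmx -> B \in unitmx ->
  invmx (A *m B) = invmx B *m invmx A.
Proof.
move=> uA uB; apply: inv_uniq.
by rewrite mulmxA -(mulmxA A) mulmxV // mulmx1 mulmxV.
Qed.

Lemma Ind_conj n (psi : 'M[F]_n -> algC) g P : P \in unitmx ->
  IndGU psi (invmx P *m g *m P) = IndGU psi g.
Proof.
move=> uP; rewrite /IndGU !inE !unitmx_mul unitmx_inv uP andbT /=.
case: (g \in unitmx) => //; congr (_ * _).
have inj : injective (@mulmx F n n n (invmx P)).
  have uiP : invmx P \in unitmx by rewrite unitmx_inv.
  by move=> u v e; rewrite -(mulKmx uiP u) e mulKmx.
rewrite (reindex_inj inj) /=; apply: eq_big => [h|h].
  by rewrite !inE unitmx_mul unitmx_inv uP.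
move=> hG; have uh : h \in unitmx by move: hG; rewrite inE unitmx_mul unitmx_inv uP.
rewrite invmxM' ?unitmx_inv // invmxK.
by rewrite !mulmxA -(mulmxA _ P) mulmxV // mulmx1 -(mulmxA _ P) mulmxV // mulmx1.
Qed.

Lemma Ind_dag n (psi : 'M[F]_n -> algC) g :
  IndGU (dmap psi) g = IndGU psi (dag g).
Proof.
rewrite /IndGU !inE dag_unit; case: (g \in unitmx) => //; congr (_ * _).
pose phi := fun h : 'M[F]_n => dag (invmx h).
have phiK : involutive phi by move=> h; rewrite /phi dag_inv dagK invmxK.
rewrite [RHS](reindex_inj (inv_inj phiK)) /=; apply: eq_big => [h|h].
  by rewrite !inE /phi dag_unit unitmx_inv.
rewrite inE => uh; rewrite /phi dag_inv invmxK -!dagM -mulmxA dag_UT.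
by rewrite /dmap mulmxA.
Qed.

End Parts.

Unset Implicit Arguments. Set Strict Implicit. Set Printing Implicit Defensive.

Theorem theorem6p2 (F : finFieldType) :
  (forall (n : nat) (psi : 'M[F]_n -> algC),
      is_cf (UT F n) psi -> is_cf (UT F n) (dmap psi)) /\
  (forall (n : nat) (phi : 'M[F]_n -> algC), is_cf (UT F n) phi ->
      exists psi, is_cf (UT F n) psi /\ dmap psi = phi) /\
  (forall (n : nat) (psi1 psi2 : 'M[F]_n -> algC),
      is_cf (UT F n) psi1 -> is_cf (UT F n) psi2 -> dmap psi1 = dmap psi2 -> psi1 = psi2) /\
  (forall (n a b : nat) (Phi : 'M[F]_a -> 'M[F]_b -> algC),
      (a + b)%N = n -> is_cf2 Phi ->
      forall g : 'M[F]_n,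
        @mu F n a b (fun x y => Phi (dag x) (dag y)) g
        = dmap (@mu F n b a (fun y x => Phi x y)) g) /\
  (forall (n a b : nat) (psi : 'M[F]_n -> algC),
      (a + b)%N = n -> is_cf (UT F n) psi ->
      forall (x : 'M[F]_a) (y : 'M[F]_b),
        @Delta F n a b (dmap psi) x y = @Delta F n b a psi (dag y) (dag x)) /\
  (forall (n : nat) (psi : 'M[F]_n -> algC), is_cf (UT F n) psi ->
      forall g : 'M[F]_n, IndGU (dmap psi) g = IndGU psi g).
Proof.
split; first exact: dmap_cf.
split.
  move=> n phi cf; exists (dmap phi); split; first exact: dmap_cf.
  by apply: functional_extensionality => g; rewrite /dmap dagK.
split.
  move=> n p1 p2 _ _ e; apply: functional_extensionality => g.
  by rewrite -(dagK g); move: (congr1 (fun f => f (dag g)) e); rewrite /dmap.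
split; first by move=> n a b Phi abn _; exact: part4.
split; first by move=> n a b psi abn cf; exact: part5.
move=> n psi cf g.
case/boolP: [exists h, (h \in GL F n) && (invmx h *m g *m h \in UT F n)].
  case/existsP => h /andP[hG uU].
  have uh : h \in unitmx by rewrite inE in hG.
  rewrite Ind_dag.
  have um : dag (invmx h) \in unitmx by rewrite dag_unit unitmx_inv.
  rewrite -(Ind_conj psi (dag g) um).
  have -> : invmx (dag (invmx h)) *m dag g *m dag (invmx h) = dag (invmx h *m g *m h).
    by rewrite dag_inv invmxK !dagM mulmxA.
  have [Q [uQ ->]] := sim_dag uU.
  by rewrite !Ind_conj.
rewrite negb_exists => /forallP none.
rewrite /IndGU; case: (g \in GL F n) => //; congr (_ * _).
have Z : forall h, h \in GL F n -> (invmx h *m g *m h \in UT F n) = false.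
  by move=> h hG; apply/negbTE; have := none h; rewrite hG.
rewrite big1 => [|h hG /=]; last by rewrite Z.
by rewrite big1 => [|h hG /=]; last by rewrite Z.
Qed.
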